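(* $\mathsf{UCQ}(\mathsf{BID})\subsetneq\mathsf{FO}(\mathsf{BID})$.
   Context: Fix a countably infinite universe $U$. A database schema is a finite nonempty set of relation symbols with arities; facts are $R(u_1,\dots,u_{\mathrm{ar}(R)})$ with $u_i\in U$; an instance is a finite set of facts; $\mathrm{adom}(D)$ is the set of elements of $U$ occurring in $D$. A probabilistic database (PDB) is a discrete probability space $(\mathbb D,P)$ with $\mathbb D$ a nonempty countable set of instances; $\mathrm{facts}(\mathcal D)$ is the union of its instances of positive probability. A PDB $\mathcal I$ is block-independent disjoint ($\mathsf{BID}$) if $\mathrm{facts}(\mathcal I)$ can be partitioned into blocks such that for facts $f_1,\dots,f_k$ from pairwise different blocks $\Pr(f_1\in I,\dots,f_k\in I)=\prod_i\Pr(f_i\in I)$, and distinct facts $f,f'$ of the same block satisfy $\Pr(f\in I\text{ and }f'\in I)=0$. First-order formulas use relational atoms $R(\bar u)$ ($\bar u$ variables or constants) and equality atoms and are evaluated under active domain semantics (quantifiers range over $\mathrm{adom}(D)$ and the formula's constants). A union of conjunctive queries (UCQ) is a formula built from atoms using only $\exists,\wedge,\vee$. An FO-view (UCQ-view) consists of one first-order (UCQ) formula $\Phi_R(x_1,\dots,x_{\mathrm{ar}(R)})$ per output relation $R$, mapping $D$ to the instance of all $R(\bar a)$ with $\bar a$ over $\mathrm{adom}(D)\cup\mathrm{adom}(\Phi_R)$ and $D\models\Phi_R[\bar a]$. The image of a PDB $(\mathbb D,P)$ under a view $V$ is the PDB on $V(\mathbb D)$ with $P'(\{D'\})=P(\{D:V(D)=D'\})$.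 $\mathsf{UCQ}(\mathsf{BID})$ and $\mathsf{FO}(\mathsf{BID})$ are the classes of images of BID-PDBs under UCQ-views and FO-views, respectively. *)

(* Defs.v *)
From Stdlib Require Rdefinitions.
From HB Require Import structures.
From mathcomp Require Import all_boot all_order all_algebra.
From mathcomp Require Import finmap.
From mathcomp Require Import boolp classical_sets reals constructive_ereal ereal esum.
From mathcomp Require Import Rstruct.

Set Implicit Arguments.
Unset Strict Implicit.
Unset Printing Implicit Defensive.

Import Order.TTheory GRing.Theory Num.Theory.

Local Open Scope classical_set_scope.

Local Open Scope ring_scope.

(* The countably infinite universe U is taken to be nat.               *)
(* A schema is a finite list of arities; relation symbol r is the      *)
(* index r < size S, with arity nth 0 S r.  (Nonemptiness is imposed   *)
(* where schemas are used.)                                            *)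

Definition schema := seq nat.
Definition arity (S : schema) (r : nat) : nat := nth 0%N S r.

(* a fact R(u_1,...,u_k) is the pair (R, [:: u_1; ...; u_k]) *)
Definition fact := (nat * seq nat)%type.
Definition instance := {fset fact}.

Definition fact_over (S : schema) (f : fact) : bool :=
  (f.1 < size S)%N && (size f.2 == arity S f.1).

Definition inst_over (S : schema) (D : instance) : Prop :=
  forall f, f \in D -> fact_over S f.

Definition adom (D : instance) : seq nat := flatten [seq f.2 | f <- enum_fset D].

Definition is_pdb (S : schema) (Dom : set instance) (P : instance -> Rdefinitions.R) : Prop :=
  [/\ (0 < size S)%N, Dom !=set0,
      (forall D, Dom D -> inst_over S D),
      (forall D, Dom D -> 0 <= P D)
    & (\esum_(D in Dom) (P D)%:E = 1)%E ].

Definition Pr (Dom : set instance) (P : instance -> Rdefinitions.R) (E : set instance) : Rdefinitions.R :=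
  fine (\esum_(D in Dom `&` E) (P D)%:E)%E.

Definition pdb_facts (Dom : set instance) (P : instance -> Rdefinitions.R) : set fact :=
  [set f | exists D, [/\ Dom D, 0 < P D & f \in D]].

(* Block-independent disjoint PDBs: facts(I) is partitioned into blocks,
   given by a labelling blk (two facts are in the same block iff they
   have the same label). *)
Definition is_BID (S : schema) (Dom : set instance) (P : instance -> Rdefinitions.R) : Prop :=
  is_pdb S Dom P /\
  exists blk : fact -> fact,
    (forall fs : seq fact,
        (forall f, f \in fs -> pdb_facts Dom P f) ->
        uniq (map blk fs) ->
        Pr Dom P [set D | all (fun f => f \in D) fs]
        = \prod_(f <- fs) Pr Dom P [set D | f \in D]) /\
    (forall f f', pdb_facts Dom P f -> pdb_facts Dom P f' -> f <> f' ->
        blk f = blk f' ->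
        Pr Dom P [set D | (f \in D) && (f' \in D)] = 0).

Inductive term := TVar of nat | TConst of nat.

Inductive formula :=
  | FRel of nat & seq term
  | FEq of term & term
  | FNot of formula
  | FAnd of formula & formula
  | FOr of formula & formula
  | FEx of nat & formula
  | FAll of nat & formula.

Fixpoint is_ucq (phi : formula) : bool :=
  match phi with
  | FRel _ _ | FEq _ _ => true
  | FNot _ | FAll _ _ => false
  | FAnd p q | FOr p q => is_ucq p && is_ucq q
  | FEx _ p => is_ucq p
  end.

Definition term_consts (t : term) : seq nat :=
  match t with TVar _ => [::] | TConst c => [:: c] end.

Fixpoint consts (phi : formula) : seq nat :=
  match phi with
  | FRel _ ts => flatten (map term_consts ts)
  | FEq t u => term_consts t ++ term_consts u
  | FNot p => consts p
  | FAnd p q | FOr p q => consts p ++ consts q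
  | FEx _ p | FAll _ p => consts p
  end.

Definition term_vars (t : term) : seq nat :=
  match t with TVar x => [:: x] | TConst _ => [::] end.

Fixpoint fv (phi : formula) : seq nat :=
  match phi with
  | FRel _ ts => flatten (map term_vars ts)
  | FEq t u => term_vars t ++ term_vars u
  | FNot p => fv p
  | FAnd p q | FOr p q => fv p ++ fv q
  | FEx x p | FAll x p => [seq y <- fv p | y != x]
  end.

Fixpoint wf_formula (S : schema) (phi : formula) : bool :=
  match phi with
  | FRel r ts => (r < size S)%N && (size ts == arity S r)
  | FEq _ _ => true
  | FNot p => wf_formula S p
  | FAnd p q | FOr p q => wf_formula S p && wf_formula S q
  | FEx _ p | FAll _ p => wf_formula S p
  end.

Definition eval_term (nu : nat -> nat) (t : term) : nat :=
  match t with TVar x => nu x | TConst c => c end.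

Definition upd (nu : nat -> nat) (x a : nat) : nat -> nat :=
  fun y => if y == x then a else nu y.

Fixpoint sat (dom : seq nat) (D : instance) (nu : nat -> nat) (phi : formula) : bool :=
  match phi with
  | FRel r ts => (r, map (eval_term nu) ts) \in D
  | FEq t u => eval_term nu t == eval_term nu u
  | FNot p => ~~ sat dom D nu p
  | FAnd p q => sat dom D nu p && sat dom D nu q
  | FOr p q => sat dom D nu p || sat dom D nu q
  | FEx x p => has (fun a => sat dom D (upd nu x a) p) dom
  | FAll x p => all (fun a => sat dom D (upd nu x a) p) dom
  end.

Fixpoint tuples (dom : seq nat) (n : nat) : seq (seq nat) :=
  match n with
  | 0 => [:: [::]]
  | n.+1 => [seq a :: t | a <- dom, t <- tuples dom n]
  end.

(* A view from S to S' is a list Phi of formulas, Phi_r = nth _ Phi r  *)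
(* for output relation r < size S', with free variables among          *)
(* x_0, ..., x_{ar(r)-1} (the head variables).                         *)

Definition dflt_formula : formula := FEq (TVar 0) (TVar 0).

Definition view_formula (Phi : seq formula) (r : nat) : formula :=
  nth dflt_formula Phi r.

Definition is_view (cls : formula -> bool) (S S' : schema) (Phi : seq formula) : Prop :=
  [/\ (0 < size S')%N, size Phi = size S' &
      forall r, (r < size S')%N ->
        [&& wf_formula S (view_formula Phi r),
            all (fun x => x < arity S' r)%N (fv (view_formula Phi r))
          & cls (view_formula Phi r)] ].

Definition FO_view := is_view (fun _ => true).
Definition UCQ_view := is_view is_ucq.

Definition view_facts (S' : schema) (Phi : seq formula) (D : instance) (r : nat) : seq fact :=
  let phi := view_formula Phi r in
  let dom := adom D ++ consts phi in
  [seq (r, a) | a <- tuples dom (arity S' r) & sat dom D (fun i => nth 0%N a i) phi].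

Definition apply_view (S' : schema) (Phi : seq formula) (D : instance) : instance :=
  [fset f | f in flatten [seq view_facts S' Phi D r | r <- iota 0 (size S')]]%fset.

Definition is_image (S' : schema) (Phi : seq formula)
    (Dom : set instance) (P : instance -> Rdefinitions.R)
    (Dom' : set instance) (P' : instance -> Rdefinitions.R) : Prop :=
  Dom' = apply_view S' Phi @` Dom /\
  forall D', Dom' D' ->
    P' D' = Pr Dom P [set D | apply_view S' Phi D = D'].

Definition in_class (cls : formula -> bool)
    (S' : schema) (Dom' : set instance) (P' : instance -> Rdefinitions.R) : Prop :=
  exists (S : schema) (Dom : set instance) (P : instance -> Rdefinitions.R) (Phi : seq formula),
    [/\ is_BID S Dom P, is_view cls S S' Phi & is_image S' Phi Dom P Dom' P'].

Definition UCQ_BID := in_class is_ucq.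
Definition FO_BID := in_class (fun _ => true).

(* Main.v *)
Require Import Defs.
From Stdlib Require Rdefinitions.
From HB Require Import structures.
From mathcomp Require Import all_boot all_order all_algebra finmap.
From mathcomp Require Import boolp classical_sets reals constructive_ereal ereal esum Rstruct.
Set Implicit Arguments.
Unset Strict Implicit.
Unset Printing Implicit Defensive.
Import Order.TTheory GRing.Theory Num.Theory.
From mathcomp Require Import cardinality fsbigop sequences zify.

Section PartA.
Local Open Scope fset_scope.

Lemma in_adom (D : instance) x : reflect (exists2 f, f \in D & x \in f.2) (x \in adom D).
Proof.
rewrite /adom; apply: (iffP flatten_mapP) => -[f Hf Hx]; exists f => //.
Qed.

Lemma in_tuples dom n a : (a \in tuples dom n) = (size a == n) && all (fun x => x \in dom) a.
Proof.
elim: n a => [|n IH] [|x a] //=.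
  by apply/allpairsPdep => -[y [t [_ _ //]]].
apply/allpairsPdep/idP.
  by move=> [y [t [Hy Ht [-> ->]]]]; move: Ht; rewrite IH => /andP[Hs Ha]; rewrite Hy eqSS Hs Ha.
by rewrite eqSS => /and3P[Hs Hx Ha]; exists x, a; rewrite Hx IH Hs Ha.
Qed.

Lemma sat_mono_ucq phi : is_ucq phi -> forall (dom1 dom2 : seq nat) (D1 D2 : instance) nu,
  {subset dom1 <= dom2} -> {subset D1 <= D2} -> sat dom1 D1 nu phi -> sat dom2 D2 nu phi.
Proof.
elim: phi => [r ts|t u|p IH|p IHp q IHq|p IHp q IHq|x p IH|x p IH] //= Hu dom1 dom2 D1 D2 nu Hd HD.
- by move/HD.
- by case/andP: Hu => Hp Hq /andP[/IHp-> // /IHq->].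
- by case/andP: Hu => Hp Hq /orP[/IHp->|/IHq->] //; rewrite orbT.
- by case/hasP => a Ha /IH Hs; apply/hasP; exists a; [exact: Hd|exact: Hs].
Qed.

Fixpoint fsize (phi : formula) : nat :=
  match phi with
  | FRel _ _ => 1
  | FEq _ _ => 0
  | FNot p => fsize p
  | FAnd p q | FOr p q => fsize p + fsize q
  | FEx _ p | FAll _ p => (fsize p).+1
  end.

Lemma sat_witness phi : is_ucq phi -> forall (dom : seq nat) (D : instance) nu,
  sat dom D nu phi ->
  exists (F : seq fact) (X : seq nat),
    [/\ {subset F <= D}, {subset X <= dom}, (size F + size X <= fsize phi)%N &
      forall (dom' : seq nat) (D' : instance), {subset X <= dom'} -> {subset F <= D'} ->
        sat dom' D' nu phi].
Proof.
elim: phi => [r ts|t u|p IH|p IHp q IHq|p IHp q IHq|x p IH|x p IH] //= Hu dom D nu.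
- move=> H; exists [:: (r, [seq eval_term nu i | i <- ts])], [::]; split => //.
  + by move=> f; rewrite inE => /eqP->.
  + by move=> dom' D' _ /(_ _ (mem_head _ _)).
- by move=> H; exists [::], [::]; split.
- case/andP: Hu => Hp Hq /andP[/(IHp Hp) [F1 [X1 [HF1 HX1 Hs1 H1]]] /(IHq Hq) [F2 [X2 [HF2 HX2 Hs2 H2]]]].
  exists (F1 ++ F2), (X1 ++ X2); split.
  + by move=> f; rewrite mem_cat => /orP[/HF1|/HF2].
  + by move=> f; rewrite mem_cat => /orP[/HX1|/HX2].
  + by rewrite !size_cat addnACA leq_add.
  + move=> dom' D' HX HF; rewrite H1 ?H2 //.
    * by move=> y Hy; apply: HX; rewrite mem_cat Hy orbT.
    * by move=> y Hy; apply: HF; rewrite mem_cat Hy orbT.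
    * by move=> y Hy; apply: HX; rewrite mem_cat Hy.
    * by move=> y Hy; apply: HF; rewrite mem_cat Hy.
- case/andP: Hu => Hp Hq /orP[/(IHp Hp) [F [X [HF HX Hs H]]]|/(IHq Hq) [F [X [HF HX Hs H]]]];
    exists F, X; split => //.
  + by rewrite (leq_trans Hs) // leq_addr.
  + by move=> dom' D' HX' HF'; rewrite H.
  + by rewrite (leq_trans Hs) // leq_addl.
  + by move=> dom' D' HX' HF'; rewrite H ?orbT.
- case/hasP => a Ha /(IH Hu) [F [X [HF HX Hs H]]].
  exists F, (a :: X); split => //.
  + by move=> y; rewrite inE => /orP[/eqP->|/HX].
  + by rewrite /= addnS ltnS.
  + move=> dom' D' HX' HF'; apply/hasP; exists a; first exact: HX' (mem_head _ _).
    by apply: H => // y Hy; apply: HX'; rewrite inE Hy orbT.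
Qed.

Definition vdom (Phi : seq formula) (D : instance) r := adom D ++ consts (view_formula Phi r).

Lemma in_apply_view S' Phi D f :
  reflect (exists r a, [/\ f = (r, a), (r < size S')%N,
             a \in tuples (vdom Phi D r) (arity S' r) &
             sat (vdom Phi D r) D (fun i => nth 0%N a i) (view_formula Phi r)])
          (f \in apply_view S' Phi D).
Proof.
rewrite /apply_view.
have -> : (f \in [fset f0 | f0 in flatten [seq view_facts S' Phi D r | r <- iota 0 (size S')]])
   = (f \in flatten [seq view_facts S' Phi D r | r <- iota 0 (size S')]).
  by apply/imfsetP/idP => [[x Hx ->]|Hf]; [|exists f].
apply: (iffP flatten_mapP).
  move=> [r]; rewrite mem_iota add0n => /andP[_ Hr] /mapP[a]; rewrite mem_filter => /andP[Hs Ha] ->.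
  by exists r, a; split.
move=> [r [a [-> Hr Ha Hs]]]; exists r; first by rewrite mem_iota add0n Hr.
by apply/mapP; exists a => //; rewrite mem_filter Hs Ha.
Qed.

Definition fs (F : seq fact) : instance := [fset x | x in F].

Lemma in_fs F x : (x \in fs F) = (x \in F).
Proof. by apply/imfsetP/idP => [[y Hy ->]|Hx]; [|exists x]. Qed.

Lemma adom_mono (D1 D2 : instance) : {subset D1 <= D2} -> {subset adom D1 <= adom D2}.
Proof. by move=> H x /in_adom [f Hf Hx]; apply/in_adom; exists f => //; apply: H. Qed.

Definition ucq_view (S' : schema) (Phi : seq formula) :=
  forall r, (r < size S')%N -> is_ucq (view_formula Phi r).

Lemma view_mono S' Phi (D1 D2 : instance) : ucq_view S' Phi ->
  {subset D1 <= D2} -> {subset apply_view S' Phi D1 <= apply_view S' Phi D2}.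
Proof.
move=> Hu HD f /in_apply_view [r [a [-> Hr Ha Hs]]].
have Hd : {subset vdom Phi D1 r <= vdom Phi D2 r}.
  move=> x; rewrite !mem_cat => /orP[/(adom_mono HD)->//|->]; by rewrite orbT.
apply/in_apply_view; exists r, a; split => //.
  move: Ha; rewrite !in_tuples => /andP[-> /allP Ha]; apply/allP => x /Ha; exact: Hd.
exact: (sat_mono_ucq (Hu r Hr) Hd HD Hs).
Qed.

Lemma view_elems S' Phi (D : instance) f x : f \in apply_view S' Phi D -> x \in f.2 ->
  x \in adom D \/ x \in consts (view_formula Phi f.1).
Proof.
move=> /in_apply_view [r [a [-> Hr Ha Hs]]] /= Hx.
move: Ha; rewrite in_tuples => /andP[_ /allP/(_ x Hx)].
by rewrite mem_cat => /orP[]; [left|right].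
Qed.

Definition pickf (D : instance) x : fact :=
  nth (0%N, [::]) (enum_fset D) (find (fun f : fact => x \in f.2) (enum_fset D)).

Lemma pickfP (D : instance) x : x \in adom D -> pickf D x \in D /\ x \in (pickf D x).2.
Proof.
move=> /in_adom [f Hf Hx].
have Hh : has (fun f : fact => x \in f.2) (enum_fset D) by apply/hasP; exists f.
split; first by apply: mem_nth; rewrite -has_find.
exact: (nth_find (0%N, [::]) Hh).
Qed.

Lemma view_witness S' Phi (D : instance) f : ucq_view S' Phi ->
  f \in apply_view S' Phi D ->
  exists F : seq fact, [/\ {subset F <= D},
     (size F <= fsize (view_formula Phi f.1) + arity S' f.1)%N &
     f \in apply_view S' Phi (fs F)].
Proof.
move=> Hu /in_apply_view [r [a [-> Hr Ha Hs]]] /=.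
have [F [X [HF HX Hsz H]]] := sat_witness (Hu r Hr) Hs.
pose F' := F ++ [seq pickf D x | x <- X ++ a & x \in adom D].
have HaS : size a = arity S' r by move: Ha; rewrite in_tuples => /andP[/eqP].
have Hv : forall x, x \in X ++ a -> x \in vdom Phi D r -> x \in vdom Phi (fs F') r.
  move=> x HXa; rewrite !mem_cat; case: (boolP (x \in adom D)) => Hx /=; last by move->; rewrite orbT.
  move=> _; have [H1 H2] := pickfP Hx; apply/orP; left; apply/in_adom.
  exists (pickf D x) => //; rewrite in_fs mem_cat; apply/orP; right.
  by apply/mapP; exists x => //; rewrite mem_filter Hx.
exists F'; split.
- move=> g; rewrite mem_cat => /orP[/HF//|/mapP[x]].
  by rewrite mem_filter => /andP[Hx _] ->; case: (pickfP Hx).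
- rewrite size_cat size_map -HaS; apply: (@leq_trans (size F + (size X + size a))).
    by rewrite leq_add2l size_filter (leq_trans (count_size _ _)) // size_cat.
  by rewrite addnA leq_add2r.
- apply/in_apply_view; exists r, a; split => //.
  + move: Ha; rewrite !in_tuples => /andP[-> /allP Ha]; apply/allP => x Hx.
    by apply: Hv; [rewrite mem_cat Hx orbT|exact: Ha].
  + apply: H.
    * by move=> x Hx; apply: Hv; [rewrite mem_cat Hx|exact: HX].
    * by move=> g Hg; rewrite in_fs mem_cat Hg.
Qed.

Lemma adom_fs_size (F : seq fact) K : (forall f, f \in F -> size f.2 <= K)%N ->
  (size (adom (fs F)) <= size F * K)%N.
Proof.
move=> HK; rewrite /adom size_flatten /shape -map_comp.
have Hu : uniq (enum_fset (fs F)) by apply: fset_uniq.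
have Hsub : {subset enum_fset (fs F) <= F} by move=> x Hx; rewrite -in_fs.
apply: (@leq_trans (size (enum_fset (fs F)) * K)); last first.
  by rewrite leq_mul2r (uniq_leq_size Hu Hsub) orbT.
elim: (enum_fset (fs F)) Hsub => [|g s IH] Hsub //=.
rewrite mulSn leq_add //; first by apply: HK; apply: Hsub; rewrite mem_head.
by apply: IH => x Hx; apply: Hsub; rewrite inE Hx orbT.
Qed.

End PartA.

Section PartB.

Local Open Scope classical_set_scope.
Local Open Scope ring_scope.
Notation R := Rdefinitions.R.

Section Prob.
Variables (S : schema) (Dom : set instance) (P : instance -> R).
Hypothesis Hpdb : is_pdb S Dom P.

Let P0 : forall D, Dom D -> 0 <= P D.
Proof. by case: Hpdb. Qed.
Let P1 : (\esum_(D in Dom) (P D)%:E = 1)%E.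
Proof. by case: Hpdb. Qed.

Definition mu (E : set instance) := (\esum_(D in Dom `&` E) (P D)%:E)%E.

Lemma mu_ge0 E : (0 <= mu E)%E.
Proof. by apply: esum_ge0 => D [HD _]; rewrite lee_fin P0. Qed.

Lemma mu_split E X : mu E = (mu (E `&` X) + mu (E `&` ~` X))%E.
Proof.
rewrite /mu (esumID X); last by move=> D [HD _]; rewrite lee_fin P0.
by rewrite !setIA.
Qed.

Lemma mu_le1 E : (mu E <= 1)%E.
Proof.
have : mu setT = 1%E by rewrite /mu setIT.
rewrite (@mu_split setT E) setTI => <-; rewrite leeDl //; exact: mu_ge0.
Qed.

Lemma mu_fin E : mu E \is a fin_num.
Proof. by rewrite ge0_fin_numE ?mu_ge0 // (le_lt_trans (mu_le1 E)) ?ltey. Qed.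

Lemma muE E : mu E = (Pr Dom P E)%:E.
Proof. by rewrite /Pr fineK // mu_fin. Qed.

Lemma Pr_split E X : Pr Dom P E = Pr Dom P (E `&` X) + Pr Dom P (E `&` ~` X).
Proof. by apply/EFin_inj; rewrite EFinD -!muE (@mu_split E X). Qed.

Lemma Pr_ext E1 E2 : (forall D, Dom D -> (E1 D <-> E2 D)) -> Pr Dom P E1 = Pr Dom P E2.
Proof.
move=> H; rewrite /Pr; congr fine; congr esum.
by apply/seteqP; split => D [HD HE]; split => //; apply/H.
Qed.

Lemma Pr_ge0 E : 0 <= Pr Dom P E.
Proof. by rewrite -lee_fin -muE mu_ge0. Qed.

Lemma Pr_le1 E : Pr Dom P E <= 1.
Proof. by rewrite -lee_fin -muE mu_le1. Qed.

Lemma Pr_mono E1 E2 : (forall D, Dom D -> E1 D -> E2 D) -> Pr Dom P E1 <= Pr Dom P E2.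
Proof.
move=> H; rewrite (@Pr_split E2 E1) (@Pr_ext (E2 `&` E1) E1).
  by rewrite lerDl Pr_ge0.
by move=> D HD; split => [[]//|HE]; split => //; apply: H.
Qed.

Lemma Pr_sum_le E (X : seq instance) : uniq X -> (forall D, D \in X -> Dom D /\ E D) ->
  \sum_(D <- X) P D <= Pr Dom P E.
Proof.
move=> HU HX; rewrite -lee_fin -muE -sumEFin fsbig_seq //; apply: esum_ge.
exists [set` X] => //; split; first exact: finite_seq.
by move=> D /= HD; have [] := HX D HD.
Qed.

Lemma Pr_ge_pt E D : Dom D -> E D -> P D <= Pr Dom P E.
Proof.
move=> HD HE; have := @Pr_sum_le E [:: D] isT.
by rewrite big_seq1; apply => D'; rewrite inE => /eqP->.
Qed.

Lemma Pr_pos E : 0 < Pr Dom P E -> exists D, [/\ Dom D, E D & 0 < P D].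
Proof.
move=> H; apply/not_existsP => Hn; move: H; rewrite -lte_fin -muE /mu esum1 ?ltxx //.
move=> D [HD HE]; apply/eqP; rewrite eqe eq_le P0 // andbT.
by rewrite leNgt; apply/negP => Hp; apply: (Hn D).
Qed.

Lemma Pr_approx E eps : 0 < eps -> exists X : seq instance,
  [/\ uniq X, (forall D, D \in X -> [/\ Dom D, E D & 0 < P D]) &
      Pr Dom P E - eps < \sum_(D <- X) P D].
Proof.
move=> He.
have : ((Pr Dom P E - eps)%:E < mu E)%E by rewrite muE lte_fin ltrBlDr ltrDl.
move=> /ereal_sup_gt [_ [A [HAf HAs] <-]].
rewrite fsbig_finite // sumEFin lte_fin => Hlt.
exists [seq D <- fset_set A | 0 < P D]; split.
- by rewrite filter_uniq // fset_uniq.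
- move=> D; rewrite mem_filter => /andP[Hp]; rewrite in_fset_set // inE => /HAs [HD HE].
  by split.
- rewrite big_filter; rewrite (bigID (fun D => 0 < P D)) /= in Hlt.
  rewrite (_ : \sum_(i <- fset_set A | ~~ (0 < P i)) P i = 0) ?addr0 // in Hlt.
  rewrite big_seq_cond big1 // => D /andP[]; rewrite in_fset_set // inE => /HAs [HD _] Hn.
  by apply/eqP; rewrite eq_le P0 // andbT leNgt.
Qed.

End Prob.

Definition Ev (X G : seq fact) : set instance :=
  [set D : instance | all (fun f => f \in D) X && all (fun g => g \notin D) G].

Section BID.
Variables (S : schema) (Dom : set instance) (P : instance -> R) (blk : fact -> fact).
Hypothesis Hpdb : is_pdb S Dom P.
Hypothesis Hprod : forall fs : seq fact,
        (forall f, f \in fs -> pdb_facts Dom P f) ->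
        uniq (map blk fs) ->
        Pr Dom P [set D | all (fun f => f \in D) fs]
        = \prod_(f <- fs) Pr Dom P [set D | f \in D].
Hypothesis Hconf : forall f f', pdb_facts Dom P f -> pdb_facts Dom P f' -> f <> f' ->
        blk f = blk f' ->
        Pr Dom P [set D | (f \in D) && (f' \in D)] = 0.

Lemma pos_facts D f : Dom D -> 0 < P D -> f \in D -> pdb_facts Dom P f.
Proof. by move=> HD HP Hf; exists D. Qed.

Lemma pos_conflict D f f' : Dom D -> 0 < P D -> f \in D -> f' \in D -> blk f = blk f' -> f = f'.
Proof.
move=> HD HP Hf Hf' Hb; apply/not_notP => Hne.
have := @Pr_ge_pt _ _ _ Hpdb [set D | (f \in D) && (f' \in D)] D HD.
rewrite Hconf //; [|exact: (pos_facts HD)|exact: (pos_facts HD)].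
by rewrite /= Hf Hf' => /(_ isT); rewrite leNgt HP.
Qed.

Lemma Pr_conflict_zero (E : set instance) f f' : pdb_facts Dom P f -> pdb_facts Dom P f' ->
  f <> f' -> blk f = blk f' -> (forall D, Dom D -> E D -> (f \in D) && (f' \in D)) ->
  Pr Dom P E = 0.
Proof.
move=> Hf Hf' Hne Hb HE; apply/eqP; rewrite eq_le (Pr_ge0 Hpdb) andbT.
by rewrite -(Hconf Hf Hf' Hne Hb); apply: (Pr_mono Hpdb).
Qed.

Lemma not_uniq_map (s : seq fact) : uniq s -> ~~ uniq (map blk s) ->
  exists f f', [/\ f \in s, f' \in s, f <> f' & blk f = blk f'].
Proof.
move=> Hu Hn; apply/not_existsP => H1; move: Hn; rewrite map_inj_in_uniq ?Hu //.
move=> x y Hx Hy Hb; apply/not_notP => Hne; apply: (H1 x); by exists y; split.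
Qed.

Lemma Pr_allin_prod (fs : seq fact) : (forall f, f \in fs -> pdb_facts Dom P f) ->
  uniq (map blk fs) ->
  Pr Dom P (Ev fs [::]) = \prod_(f <- fs) Pr Dom P [set D | f \in D].
Proof.
move=> H1 H2; rewrite -Hprod //; apply: Pr_ext => D _; rewrite /Ev /= andbT; split => //.
Qed.

Lemma ident (F : seq fact) : (forall f, f \in F -> pdb_facts Dom P f) -> uniq (map blk F) ->
  forall (G b : seq fact),
    (forall g, g \in G -> pdb_facts Dom P g /\ blk g \notin map blk F) ->
    (forall g, g \in b -> pdb_facts Dom P g /\ blk g \notin map blk F) ->
    Pr Dom P (Ev (F ++ b) G) = Pr Dom P (Ev F [::]) * Pr Dom P (Ev b G).
Proof.
move=> HF HuF; elim => [|g G IH] b HG Hb.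
- pose b' := undup b.
  have Eb : forall D : instance, all (fun f => f \in D) b = all (fun f => f \in D) b'.
    by move=> D; apply: eq_all_r => x; rewrite mem_undup.
  have HbF : forall g, g \in b' -> pdb_facts Dom P g /\ blk g \notin map blk F.
    by move=> x; rewrite mem_undup; apply: Hb.
  rewrite (@Pr_ext Dom P (Ev (F ++ b) [::]) (Ev (F ++ b') [::])); last first.
    by move=> D _; rewrite /Ev /= !all_cat Eb.
  rewrite (@Pr_ext Dom P (Ev b [::]) (Ev b' [::])); last first.
    by move=> D _; rewrite /Ev /= Eb.
  case: (boolP (uniq (map blk b'))) => Hub.
  + rewrite !Pr_allin_prod ?big_cat //.
    * by move=> f /HbF [].
    * by move=> f; rewrite mem_cat => /orP[/HF|/HbF[]].
    * rewrite map_cat cat_uniq HuF Hub andbT /=; apply/hasPn => x /mapP[y /HbF [_ Hy] ->].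
      exact: Hy.
  + have [f [f' [Hf Hf' Hne Hbl]]] := not_uniq_map (undup_uniq b) Hub.
    have [Pf _] := HbF f Hf; have [Pf' _] := HbF f' Hf'.
    rewrite (@Pr_conflict_zero (Ev b' [::]) f f') // ?mulr0.
      rewrite (@Pr_conflict_zero (Ev (F ++ b') [::]) f f') //.
      move=> D _; rewrite /Ev /= andbT all_cat => /andP[_ /allP Hall].
      by rewrite !Hall.
    move=> D _; rewrite /Ev /= andbT => /allP Hall.
    by rewrite !Hall.
- have Hg0 : forall g0, g0 \in G -> pdb_facts Dom P g0 /\ blk g0 \notin map blk F.
    by move=> x Hx; apply: HG; rewrite inE Hx orbT.
  have Hgg : pdb_facts Dom P g /\ blk g \notin map blk F by apply: HG; rewrite mem_head.
  have Hgb : forall g0, g0 \in g :: b -> pdb_facts Dom P g0 /\ blk g0 \notin map blk F.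
    by move=> x; rewrite inE => /orP[/eqP->//|/Hb].
  have split_ev : forall X, Pr Dom P (Ev X (g :: G)) =
      Pr Dom P (Ev X G) - Pr Dom P (Ev (g :: X) G).
    move=> X; rewrite (@Pr_split _ _ _ Hpdb (Ev X G) [set D | g \in D]).
    rewrite (@Pr_ext Dom P (Ev X G `&` [set D | g \in D]) (Ev (g :: X) G)); last first.
      move=> D _; rewrite /Ev /=; split => [[/andP[HX HG0] Hm]|/andP[/andP[Hm HX] HG0]].
        by rewrite Hm HX HG0.
      by split => //; rewrite HX HG0.
    rewrite (@Pr_ext Dom P (Ev X G `&` ~` [set D | g \in D]) (Ev X (g :: G))); last first.
      move=> D _; rewrite /Ev /=; split => [[/andP[HX HG0] /negP Hm]|/andP[HX /andP[Hm HG0]]].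
        by rewrite HX Hm HG0.
      by split; [rewrite HX HG0|apply/negP].
    by rewrite addrC addKr.
  rewrite !split_ev.
  rewrite (@Pr_ext Dom P (Ev (g :: F ++ b) G) (Ev (F ++ g :: b) G)); last first.
    move=> D _; rewrite /Ev /= !all_cat /=.
    by case: (g \in D) (all (fun f => f \in D) F) (all (fun f => f \in D) b) => [] [] [].
  by rewrite IH // (IH (g :: b)) // mulrBr.
Qed.

Lemma avoid_world (F : seq fact) D0 W0 k :
  Dom D0 -> 0 < P D0 -> {subset F <= D0} ->
  Dom W0 -> 0 < P W0 -> k \notin adom W0 ->
  (forall f, f \in F -> k \notin f.2) ->
  exists W, [/\ Dom W, 0 < P W, {subset F <= W} & k \notin adom W].
Proof.
move=> HD0 PD0 HFD0 HW0 PW0 kW0 kF; apply/not_notP => Hn.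
have Hall : forall W, Dom W -> 0 < P W -> {subset F <= W} -> k \in adom W.
  move=> W HW PW HFW; apply/negPn/negP => Hk; apply: Hn; by exists W.
pose F1 := undup F.
have HF1 : forall f, f \in F1 -> pdb_facts Dom P f.
  by move=> f; rewrite mem_undup => /HFD0; apply: pos_facts.
have Hu1 : uniq (map blk F1).
  rewrite map_inj_in_uniq ?undup_uniq // => x y; rewrite !mem_undup => Hx Hy.
  by apply: (pos_conflict HD0 PD0); apply: HFD0.
have EF : forall D : instance, all (fun f => f \in D) F = all (fun f => f \in D) F1.
  by move=> D; apply: eq_all_r => x; rewrite mem_undup.
pose pF := Pr Dom P (Ev F1 [::]).
have HpF : P D0 <= pF.
  apply: (Pr_ge_pt Hpdb) => //; rewrite /Ev /= andbT -EF; exact/allP.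
pose c := pF * P W0.
have Hc : 0 < c by rewrite mulr_gt0 // (lt_le_trans PD0 HpF).
have [X [HuX HX Hlt]] := Pr_approx Hpdb (Ev F1 [::]) Hc.
have HXk : forall W, W \in X -> pickf W k \in W /\ k \in (pickf W k).2.
  move=> W /HX [HW HE PW]; apply: pickfP; apply: Hall => //.
  by move: HE; rewrite /Ev /= andbT -EF => /allP.
pose G := [seq pickf W k | W <- X].
have HG : forall g, g \in G -> pdb_facts Dom P g /\ blk g \notin map blk F1.
  move=> g /mapP[W HWX ->]; have [HW HE PW] := HX W HWX; have [Hg Hkg] := HXk W HWX.
  split; first exact: (pos_facts HW PW Hg).
  apply/negP => /mapP[f Hf Hb].
  have Hfw : f \in W by move: HE; rewrite /Ev /= andbT => /allP; apply.
  have Heq := pos_conflict HW PW Hg Hfw Hb.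
  by move: (kF f); rewrite -mem_undup -/F1 => /(_ Hf); rewrite -Heq Hkg.
have Hid := @ident F1 HF1 Hu1 G [::] HG (fun g (H : g \in [::]) => False_ind _ (notF H)).
have HA : P W0 <= Pr Dom P (Ev [::] G).
  apply: (Pr_ge_pt Hpdb) => //; rewrite /Ev /=; apply/allP => g /mapP[W HWX ->].
  apply/negP => Hg; move/negP: kW0; apply; apply/in_adom; exists (pickf W k) => //.
  by case: (HXk W HWX).
have Hsplit := @Pr_split _ _ _ Hpdb (Ev F1 [::]) (Ev [::] G).
rewrite (@Pr_ext Dom P (Ev F1 [::] `&` Ev [::] G) (Ev (F1 ++ [::]) G)) in Hsplit; last first.
  by move=> D _; rewrite /Ev /= cats0 andbT; split => [[-> ->]|/andP[-> ->]].
have Hsum : \sum_(D <- X) P D <= Pr Dom P (Ev F1 [::] `&` ~` Ev [::] G).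
  apply: (Pr_sum_le Hpdb) => // W HWX; have [HW HE PW] := HX W HWX; split => //; split => //.
  rewrite /Ev /= => /allP /(_ (pickf W k)).
  by rewrite (map_f (fun W => pickf W k) HWX) => /(_ isT); case: (HXk W HWX) => ->.
rewrite Hid -/pF in Hsplit.
have H3 : c <= pF * Pr Dom P (Ev [::] G) by rewrite ler_wpM2l // (le_trans (ltW PD0) HpF).
move: Hlt Hsum H3 Hsplit.
set s := \sum_(D <- X) P D; set q := Pr Dom P (Ev F1 [::] `&` ~` Ev [::] G).
set r := pF * _; move=> H1 H2 H3 H4.
have : pF - c < pF - c.
  apply: (lt_le_trans H1); apply: (le_trans H2).
  by rewrite H4 [r + q]addrC -addrA lerDl subr_ge0.
by rewrite ltxx.
Qed.

End BID.

End PartB.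

Section PartC.

Fixpoint bit (i m : nat) : bool := if i is i'.+1 then bit i' m./2 else odd m.

Lemma bit_flip j m i : ~~ bit j m -> bit i (m + 2 ^ j) = (i == j) || bit i m.
Proof.
elim: j m i => [|j IH] m i /= Hm.
- case: i => [|i] /=; first by rewrite addn1 /= (negPf Hm).
  congr bit; rewrite -!divn2; have := odd_double_half m; rewrite (negPf Hm); lia.
- case: i => [|i] /=.
  + by rewrite oddD oddX /= addbF.
  + rewrite -IH //; congr bit.
    rewrite expnS -!divn2; have := odd_double_half m; lia.
Qed.

Lemma bit_unflip j m : bit j m -> exists m', m = m' + 2 ^ j /\ ~~ bit j m'.
Proof.
elim: j m => [|j IH] m /= Hm.
- exists m.-1; rewrite expn0 addn1 prednK; last by case: m Hm.
  by split => //; case: m Hm => //= m; rewrite negbK.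
- have [y [Hy Hny]] := IH _ Hm.
  exists (odd m + y.*2); split; last by rewrite /= -divn2; have -> : (odd m + y.*2) %/ 2 = y by case: (odd m); lia.
  have := odd_double_half m; rewrite Hy expnS; lia.
Qed.

Lemma bit_small j m : (m < 2 ^ j)%N -> bit j m = false.
Proof.
elim: j m => [|j IH] m /=; first by case: m.
move=> Hm; apply: IH; move: Hm; rewrite expnS -divn2; lia.
Qed.

Lemma bit_lt j m : bit j m -> (j < m)%N.
Proof.
move=> H; rewrite ltnNge; apply/negP => Hmj; move: H; rewrite bit_small //.
by apply: (leq_trans (ltn_expl m (ltnSn 1))); rewrite leq_pexp2l.
Qed.

Lemma bits_inj_aux n : forall m m', (m < 2 ^ n)%N -> (m' < 2 ^ n)%N ->
  (forall j, bit j m = bit j m') -> m = m'.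
Proof.
elim: n => [|n IH] m m' Hm Hm' Hb; first by move: Hm Hm'; rewrite expn0 !ltnS !leqn0 => /eqP-> /eqP->.
have H0 := Hb 0%N; have Hh : m./2 = m'./2.
  apply: IH; try (rewrite -divn2; move: Hm Hm'; rewrite expnS; lia).
  by move=> j; apply: (Hb j.+1).
rewrite -(odd_double_half m) -(odd_double_half m') Hh; simpl in H0; by rewrite H0.
Qed.

Lemma bits_inj m m' : (forall j, bit j m = bit j m') -> m = m'.
Proof.
move=> Hb; apply: (@bits_inj_aux (maxn m m')) => //.
- by apply: (leq_trans (ltn_expl m (ltnSn 1))); rewrite leq_pexp2l // leq_maxl.
- by apply: (leq_trans (ltn_expl m' (ltnSn 1))); rewrite leq_pexp2l // leq_maxr.
Qed.

Lemma bit_sum (L : seq nat) i : uniq L -> bit i (\sum_(j <- L) 2 ^ j) = (i \in L).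
Proof.
elim: L i => [|j L IH] i /=; first by rewrite big_nil bit_small // expn_gt0.
by move=> /andP[HjL HuL]; rewrite big_cons addnC bit_flip ?IH ?inE.
Qed.

Definition cel (n i : nat) : nat := CodeSeq.code [:: n; i].
Definition nxt (j : nat) : nat :=
  match CodeSeq.decode j with
  | [:: n; i] => if (i <= n)%N then cel n (i.+1 %% n.+1) else j
  | _ => j
  end.
Definition edge (j : nat) : fact := (0%N, [:: j; nxt j]).
Definition prv (n i : nat) : nat := if i is i'.+1 then i' else n.

Lemma cel_inj n i n' i' : cel n i = cel n' i' -> n = n' /\ i = i'.
Proof. by move=> /(congr1 CodeSeq.decode); rewrite /cel !CodeSeq.codeK => -[-> ->]. Qed.

Lemma nxt_cel n i : (i <= n)%N -> nxt (cel n i) = cel n (i.+1 %% n.+1).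
Proof. by rewrite /nxt /cel CodeSeq.codeK => ->. Qed.

Lemma prv_le n i : (i <= n)%N -> (prv n i <= n)%N.
Proof. by case: i => //= i Hi; apply: ltnW. Qed.

Lemma nxt_prv n i : (i <= n)%N -> nxt (cel n (prv n i)) = cel n i.
Proof.
move=> Hi; rewrite nxt_cel ?prv_le //; congr cel.
case: i Hi => [|i] /= Hi; first by rewrite modnn.
by rewrite modn_small.
Qed.

Lemma nxt_inv w n i : (i <= n)%N -> nxt w = cel n i -> w = cel n (prv n i).
Proof.
move=> Hi; rewrite /nxt; have Hw : w = CodeSeq.code (CodeSeq.decode w) by rewrite CodeSeq.decodeK.
have Hbad : w = cel n i -> False -> False by [].
case E: (CodeSeq.decode w) => [|a [|b [|c s]]];
  try by move=> Hwc; move: E; rewrite Hwc /cel CodeSeq.codeK.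
case: ifP => Hba; last by move=> Hwc; move: E; rewrite Hwc /cel CodeSeq.codeK => -[Ha Hb]; move: Hba; rewrite -Ha -Hb Hi.
move=> /cel_inj [Ha Hb]; subst a; rewrite Hw E; congr cel.
move: Hba; rewrite leq_eqVlt => /orP[/eqP Hbn|Hbn].
  by subst b; move: Hb; rewrite modnn => <-.
by move: Hb; rewrite modn_small // => <-.
Qed.

Definition Dm (m : nat) : instance := fs [seq edge j | j <- iota 0 m & bit j m].

Lemma edge_inj : injective edge.
Proof. by move=> j j' [->]. Qed.

Lemma in_Dm m f : reflect (exists2 j, bit j m & f = edge j) (f \in Dm m).
Proof.
rewrite /Dm in_fs; apply: (iffP mapP) => [[j]|[j Hj ->]].
  by rewrite mem_filter => /andP[Hj _] ->; exists j.
by exists j => //; rewrite mem_filter Hj mem_iota add0n (bit_lt Hj).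
Qed.

Lemma edge_in_Dm j m : (edge j \in Dm m) = bit j m.
Proof.
apply/in_Dm/idP => [[j' Hj /edge_inj ->]//|Hj]; by exists j.
Qed.

Lemma Dm_inj : injective Dm.
Proof.
move=> m m' H; apply: bits_inj => j; by rewrite -!edge_in_Dm H.
Qed.

Definition PhiFO : formula := FAnd (FRel 0 [:: TVar 0; TVar 1])
  (FAll 2 (FAll 3 (FOr (FNot (FRel 0 [:: TVar 2; TVar 3])) (FEx 4 (FRel 0 [:: TVar 4; TVar 2]))))).
Definition S2 : schema := [:: 2%N].
Definition VFO (D : instance) : instance := apply_view S2 [:: PhiFO] D.

Definition closedb (D : instance) : bool :=
  all (fun u => all (fun v => ((0%N, [:: u; v]) \notin D) ||
     has (fun w => (0%N, [:: w; u]) \in D) (adom D)) (adom D)) (adom D).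

Lemma sat_PhiFO dom D nu : sat dom D nu PhiFO = ((0%N, [:: nu 0%N; nu 1%N]) \in D) &&
  all (fun u => all (fun v => ((0%N, [:: u; v]) \notin D) ||
     has (fun w => (0%N, [:: w; u]) \in D) dom) dom) dom.
Proof. by []. Qed.

Lemma in_VFO D f : inst_over S2 D -> (f \in VFO D) = (f \in D) && closedb D.
Proof.
move=> Hov; apply/in_apply_view/idP.
- move=> [r [a [-> Hr Ha Hs]]]; move: Hr; rewrite /= ltnS leqn0 => /eqP Hr; subst r.
  move: Ha Hs; rewrite in_tuples /vdom /view_formula /= cats0.
  case: a => [|x [|y [|z a]]] //= _; by rewrite sat_PhiFO.
- move=> /andP[Hf Hc]; have := Hov f Hf; case: f Hf => r a Hf.
  rewrite /fact_over /arity /= ltnS leqn0 => /andP[/eqP Hr Hsz]; subst r.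
  exists 0%N, a; split => //.
  + rewrite in_tuples /vdom /view_formula /= cats0 Hsz /=; apply/allP => x Hx.
    by apply/in_adom; exists (0%N, a).
  + rewrite /vdom /view_formula (_ : nth dflt_formula [:: PhiFO] 0 = PhiFO) // sat_PhiFO /= cats0.
    by case: a Hsz Hf => [|x [|y [|z a]]] //= _ ->.
Qed.

Lemma closedbP D : reflect (forall u v, (0%N, [:: u; v]) \in D -> exists w, (0%N, [:: w; u]) \in D)
  (closedb D).
Proof.
apply: (iffP allP) => [H u v Huv|H u Hu].
- have Hu : u \in adom D by apply/in_adom; exists (0%N, [:: u; v]); rewrite ?inE ?eqxx.
  have Hv : v \in adom D by apply/in_adom; exists (0%N, [:: u; v]); rewrite ?inE ?eqxx ?orbT.
  move: (H u Hu) => /allP /(_ v Hv); rewrite Huv /= => /hasP [w _ Hw]; by exists w.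
- apply/allP => v Hv; case: (boolP ((0%N, [:: u; v]) \in D)) => //= Huv.
  have [w Hw] := H u v Huv; apply/hasP; exists w => //.
  by apply/in_adom; exists (0%N, [:: w; u]); rewrite ?inE ?eqxx.
Qed.

Lemma comp_step m n i : closedb (Dm m) -> (i <= n)%N -> bit (cel n i) m -> bit (cel n (prv n i)) m.
Proof.
move=> /closedbP Hc Hi Hb.
have := Hc (cel n i) (nxt (cel n i)); rewrite -/(edge (cel n i)) edge_in_Dm => /(_ Hb) [w].
move=> /in_Dm [j Hj [Hwj Hnj]]; rewrite -(nxt_inv Hi (esym Hnj)); exact: Hj.
Qed.

Lemma comp_closed m n i : closedb (Dm m) -> (i <= n)%N -> bit (cel n i) m ->
  forall t, (t <= n)%N -> bit (cel n t) m.
Proof.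
move=> Hc Hi Hb.
have down : forall i, (i <= n)%N -> bit (cel n i) m -> forall t, (t <= i)%N -> bit (cel n t) m.
  elim => [|i' IH] Hi' Hb' t Ht; first by move: Ht; rewrite leqn0 => /eqP->.
  move: Ht; rewrite leq_eqVlt => /orP[/eqP->//|Ht].
  apply: IH => //; first exact: ltnW.
  exact: (comp_step Hc Hi' Hb').
have H0 : bit (cel n 0) m by apply: (down i) => //.
have Hn : bit (cel n n) m by apply: (comp_step Hc (leq0n n) H0).
by move=> t Ht; apply: (down n).
Qed.

Definition Ln (n : nat) : seq nat := [seq cel n i | i <- iota 0 n.+1].
Definition mn (n : nat) : nat := \sum_(j <- Ln n) 2 ^ j.

Lemma Ln_uniq n : uniq (Ln n).
Proof.
rewrite map_inj_in_uniq ?iota_uniq // => i i' _ _ /cel_inj [_ ->] //.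
Qed.

Lemma size_Ln n : size (Ln n) = n.+1.
Proof. by rewrite size_map size_iota. Qed.

Lemma bit_mn n j : bit j (mn n) = (j \in Ln n).
Proof. by rewrite /mn bit_sum // Ln_uniq. Qed.

Lemma in_Ln n j : reflect (exists2 i, (i <= n)%N & j = cel n i) (j \in Ln n).
Proof.
apply: (iffP mapP) => [[i]|[i Hi ->]]; first by rewrite mem_iota add0n => /andP[_ Hi] ->; exists i.
by exists i => //; rewrite mem_iota add0n ltnS Hi.
Qed.

Lemma closed_mn n : closedb (Dm (mn n)).
Proof.
apply/closedbP => u v /in_Dm [j]; rewrite bit_mn => /in_Ln [i Hi ->] [-> _].
exists (cel n (prv n i)); rewrite -(nxt_prv Hi) -/(edge _) edge_in_Dm bit_mn.
by apply/in_Ln; exists (prv n i) => //; apply: prv_le.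
Qed.

Lemma Dm_over m : inst_over S2 (Dm m).
Proof. by move=> f /in_Dm [j _ ->]. Qed.

End PartC.

Section PartD.

Local Open Scope classical_set_scope.
Local Open Scope ring_scope.
Notation R := Rdefinitions.R.

Definition w (m : nat) : R := ((2 ^ m.+1)%:R)^-1.

Lemma w_gt0 m : 0 < w m.
Proof. by rewrite /w invr_gt0 ltr0n expn_gt0. Qed.

Definition nu (Q : set nat) := (\esum_(m in Q) (w m)%:E)%E.

Lemma nu_ge0 Q : (0 <= nu Q)%E.
Proof. by apply: esum_ge0 => m _; rewrite lee_fin ltW // w_gt0. Qed.

Lemma nu_setT : nu setT = 1%E.
Proof.
rewrite /nu -nneseries_esumT; last by move=> n; rewrite lee_fin ltW // w_gt0.
have := @cvg_geometric_eseries_half R 1 0; rewrite expr0 divr1.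
rewrite (_ : (fun k => (1 / (2 ^ (k + 1))%:R)%:E) = (fun k => (w k)%:E)); last first.
  by apply/funext => k; rewrite /w div1r addn1.
by move=> H; apply: cvg_lim.
Qed.

Lemma esumZ_nat (A : set nat) (c : R) (f : nat -> R) : 0 <= c -> (forall m, 0 <= f m) ->
  (\esum_(m in A) (c * f m)%:E = c%:E * \esum_(m in A) (f m)%:E)%E.
Proof.
move=> Hc Hf; rewrite esum_mkcond [in RHS]esum_mkcond.
rewrite -!nneseries_esumT; try (by move=> n; case: ifP => // _; rewrite lee_fin ?mulr_ge0).
rewrite -nneseriesZl; last by move=> n _; case: ifP => // _; rewrite lee_fin.
by apply: eq_eseriesr => k _; case: ifP => //; rewrite mule0.
Qed.

Lemma nu_split Q X : nu Q = (nu (Q `&` X) + nu (Q `&` ~` X))%E.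
Proof. by rewrite /nu (esumID X) // => m _; rewrite lee_fin ltW // w_gt0. Qed.

Lemma nu_le1 Q : (nu Q <= 1)%E.
Proof.
rewrite -nu_setT (nu_split setT Q) setTI leeDl //; exact: nu_ge0.
Qed.

Lemma nu_fin Q : nu Q \is a fin_num.
Proof. by rewrite ge0_fin_numE ?nu_ge0 // (le_lt_trans (nu_le1 Q)) ?ltey. Qed.

Definition tw (j : nat) : R := ((2 ^ (2 ^ j))%:R)^-1.

Lemma w_shift m j : w (m + 2 ^ j)%N = tw j * w m.
Proof.
by rewrite /w /tw -invfM -natrM -expnD addnS [(2 ^ j + m)%N]addnC.
Qed.

Lemma nu_shift (Q : set nat) j : (forall m, ~~ bit j m -> (Q (m + 2 ^ j)%N <-> Q m)) ->
  nu [set m | Q m /\ bit j m] = ((tw j)%:E * nu [set m | Q m /\ ~~ bit j m])%E.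
Proof.
move=> HQ; rewrite /nu (reindex_esum [set m | Q m /\ ~~ bit j m] _ (fun m => (m + 2 ^ j)%N)).
  rewrite -esumZ_nat; first by apply: eq_esum => m _; rewrite w_shift.
    by rewrite /tw invr_ge0 ler0n.
  by move=> m; rewrite ltW // w_gt0.
split.
- move=> m [Hm Hb]; split; first by apply/HQ.
  by rewrite bit_flip // eqxx.
- by move=> m m' _ _; apply: addIn.
- move=> m [Hm Hb]; have [m' [Hm' Hb']] := bit_unflip Hb.
  exists m' => //; split => //; apply/HQ => //; by rewrite -Hm'.
Qed.

Definition DomFO : set instance := [set Dm m | m in [set: nat]].
Definition PFO (D : instance) : R := w (xget 0%N [set m | Dm m = D]).

Lemma PFO_Dm m : PFO (Dm m) = w m.
Proof.
rewrite /PFO; congr w; apply: Dm_inj.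
by apply: (@xgetI _ 0%N [set m' | Dm m' = Dm m] m).
Qed.

Lemma muFO E : (\esum_(D in DomFO `&` E) (PFO D)%:E = nu [set m | E (Dm m)])%E.
Proof.
have -> : DomFO `&` E = Dm @` [set m | E (Dm m)].
  apply/seteqP; split => [D [[m _ <-] HE]|D [m Hm <-]]; first by exists m.
  by split => //; exists m.
rewrite esum_image; last by move=> m m' _ _; apply: Dm_inj.
by apply: eq_esum => m _; rewrite PFO_Dm.
Qed.

Lemma PrFO E : Pr DomFO PFO E = fine (nu [set m | E (Dm m)]).
Proof. by rewrite /Pr muFO. Qed.

Lemma pdbFO : is_pdb S2 DomFO PFO.
Proof.
split => //.
- by exists (Dm 0%N), 0%N.
- by move=> D [m _ <-]; apply: Dm_over.
- by move=> D [m _ <-]; rewrite PFO_Dm ltW // w_gt0.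
- by rewrite -(setIT DomFO) muFO; rewrite (_ : [set m | setT (Dm m)] = setT) ?nu_setT.
Qed.

Definition QJ (J : seq nat) : set nat := [set m | all (fun j => bit j m) J].

Lemma prod_bits j J : j \notin J ->
  fine (nu (QJ (j :: J))) = fine (nu (QJ J)) * fine (nu (QJ [:: j])).
Proof.
move=> HjJ.
have key : forall J', j \notin J' ->
    nu (QJ (j :: J')) = ((tw j)%:E * nu [set m | QJ J' m /\ ~~ bit j m])%E /\
    nu (QJ J') = (nu (QJ (j :: J')) + nu [set m | QJ J' m /\ ~~ bit j m])%E.
  move=> J' Hj'; have -> : QJ (j :: J') = [set m | QJ J' m /\ bit j m].
    by apply/seteqP; split => m /=; rewrite /QJ /=; [move=> /andP[-> ->]|move=> [-> ->]].
  split; first apply: nu_shift.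
    move=> m Hb; rewrite /QJ /=; suff -> : all (fun j0 => bit j0 (m + 2 ^ j)) J' = all (fun j0 => bit j0 m) J' by [].
    apply: eq_in_all => i Hi; rewrite bit_flip //; case: eqP => // Hij; subst i; by rewrite Hi in Hj'.
  rewrite (nu_split (QJ J') [set m | bit j m]); congr (nu _ + nu _)%E.
  by apply/seteqP; split => m /=; rewrite /setC /= => -[H1 H2]; split => //; apply/negP.
have [H1 H2] := key J HjJ; have [H3 H4] := key [::] isT.
have QJ0 : QJ [::] = setT by apply/seteqP; split.
rewrite (_ : nu (QJ [::]) = 1%E) in H4; last by rewrite QJ0 nu_setT.
set a := nu (QJ (j :: J)) in H1 H2 *; set b := nu [set m | QJ J m /\ ~~ bit j m] in H1 H2.
set a0 := nu (QJ [:: j]) in H3 H4 *; set b0 := nu [set m | QJ [::] m /\ ~~ bit j m] in H3 H4.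
have fa : a = (fine a)%:E by rewrite fineK // nu_fin.
have fb : b = (fine b)%:E by rewrite fineK // nu_fin.
have fa0 : a0 = (fine a0)%:E by rewrite fineK // nu_fin.
have fb0 : b0 = (fine b0)%:E by rewrite fineK // nu_fin.
have R1 : fine a = tw j * fine b by rewrite H1 fb -EFinM.
have R3 : fine a0 = tw j * fine b0 by rewrite H3 fb0 -EFinM.
have R4 : 1 = fine a0 + fine b0 by rewrite -[RHS]/(fine ((fine a0)%:E + (fine b0)%:E)) -fa0 -fb0 -H4.
have R2 : fine (a + b)%E = fine a + fine b by rewrite fa fb -EFinD.
rewrite H2 R2 R3 R1; set t := tw j; set x := fine b; set y := fine b0.
rewrite R3 -/t -/y in R4.
rewrite -{1}[t * x]mulr1 R4 mulrDr mulrDl; congr (_ + _); by rewrite mulrA (mulrC x t).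
Qed.

Definition idx (f : fact) : nat := head 0%N f.2.

Lemma pos_edge f : pdb_facts DomFO PFO f -> f = edge (idx f).
Proof. by move=> [D [[m _ <-] _ /in_Dm [j _ ->]]]. Qed.

Lemma Pr_all_FO (fs : seq fact) : (forall f, f \in fs -> f = edge (idx f)) ->
  Pr DomFO PFO [set D | all (fun f => f \in D) fs] = fine (nu (QJ (map idx fs))).
Proof.
move=> H; rewrite PrFO; congr (fine (nu _)); apply/seteqP; split => m /=;
  rewrite /QJ /= all_map; (have E : all (fun f => f \in Dm m) fs = all (preim idx (fun j => bit j m)) fs
    by apply: eq_in_all => f /H Hf; rewrite /= {1}Hf edge_in_Dm); by rewrite E.
Qed.

Lemma bidFO : is_BID S2 DomFO PFO.
Proof.
split; first exact: pdbFO.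
exists id; split; last by move=> f f' _ _ Hne Heq; case: Hne.
elim => [|f fs IH] Hfs; first by rewrite big_nil Pr_all_FO //= (_ : QJ [::] = setT) ?nu_setT //; apply/seteqP.
rewrite map_id cons_uniq => /andP[Hf Hu].
have Hall : forall g, g \in f :: fs -> g = edge (idx g) by move=> g /Hfs /pos_edge.
rewrite big_cons -IH ?map_id //; last by move=> g Hg; apply: Hfs; rewrite inE Hg orbT.
have Hall' : forall g, g \in fs -> g = edge (idx g) by move=> g Hg; apply: Hall; rewrite inE Hg orbT.
rewrite (@Pr_all_FO (f :: fs) Hall) (@Pr_all_FO fs Hall').
have Hf1 : forall g, g \in [:: f] -> g = edge (idx g) by move=> g; rewrite inE => /eqP->; apply: Hall; rewrite mem_head.
have E1 : Pr DomFO PFO [set D | f \in D] = fine (nu (QJ [:: idx f])).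
  rewrite -(@Pr_all_FO [:: f] Hf1); apply: Pr_ext => D _ /=; by rewrite andbT.
rewrite E1 (@prod_bits (idx f) (map idx fs)); first by rewrite mulrC.
apply/mapP => -[g Hg Hi]; move/negP: Hf; apply.
by rewrite (Hall f (mem_head _ _)) Hi -(Hall' g Hg).
Qed.


End PartD.

Section PartE.

Local Open Scope classical_set_scope.
Local Open Scope ring_scope.

Lemma nth_le_sum (S : seq nat) r : (nth 0%N S r <= \sum_(a <- S) a)%N.
Proof.
elim: S r => [|a S IH] [|r] //=; rewrite big_cons; first exact: leq_addr.
exact: (leq_trans (IH r) (leq_addl _ _)).
Qed.

Lemma pick_notin (s L : seq nat) : uniq s -> (size L < size s)%N -> exists2 x, x \in s & x \notin L.
Proof.
move=> Hu Hs; case: (boolP (all (fun x => x \in L) s)) => [/allP Hsub|/allPn [x Hx HxL]].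
  by move: (uniq_leq_size Hu Hsub); rewrite leqNgt Hs.
by exists x.
Qed.

Lemma not_ucq_FO :
  ~ UCQ_BID S2 (VFO @` DomFO) (fun D' => Pr DomFO PFO [set D | VFO D = D']).
Proof.
move=> [S [Dom [P [Phi [[Hpdb [blk [Hprod Hconf]]] Hv [HDom' HP']]]]]].
have Hu : ucq_view S2 Phi by case: Hv => _ _ H r Hr; case/and3P: (H r Hr).
have HsPhi : size Phi = 1%N by case: Hv.
have [W0 [HW0 _ PW0]] : exists D, [/\ Dom D, setT D & 0 < P D].
  apply: (Pr_pos Hpdb); rewrite /Pr setIT; case: Hpdb => _ _ _ _ ->; by [].
pose phi := view_formula Phi 0.
pose C := consts phi.
pose K := (\sum_(a <- S) a)%N.
pose B := (fsize phi + 2)%N.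
pose n := (size C + size (adom W0) + B * K)%N.
pose X := Dm (mn n).
have HVX : VFO X = X.
  by apply/fsetP => f; rewrite /X in_VFO; [rewrite closed_mn andbT|exact: Dm_over].
have HX : (VFO @` DomFO) X by exists X => //; exists (mn n).
have HPX : 0 < Pr Dom P [set D | apply_view S2 Phi D = X].
  rewrite -HP' //; apply: (lt_le_trans (w_gt0 (mn n))); rewrite -PFO_Dm.
  by apply: (Pr_ge_pt pdbFO) => //; exists (mn n).
have [D [HD HDX PD]] := Pr_pos Hpdb HPX.
pose e0 := edge (cel n 0).
have He0X : e0 \in X by rewrite edge_in_Dm bit_mn; apply/in_Ln; exists 0%N.
have He0D : e0 \in apply_view S2 Phi D by rewrite HDX.
have [F [HFD HFs He0F]] := view_witness Hu He0D.
have Hsz : (size (adom (fs F)) <= B * K)%N.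
  apply: (leq_trans (adom_fs_size (K := K) _)); last by rewrite leq_mul2r HFs orbT.
  move=> f /HFD Hf; case: Hpdb => _ _ Hover _ _; have := Hover D HD f Hf.
  by rewrite /fact_over => /andP[_ /eqP ->]; apply: nth_le_sum.
have Hlen : (size (C ++ adom W0 ++ adom (fs F)) < size (Ln n))%N.
  by rewrite size_Ln !size_cat ltnS addnA leq_add2l.
have [k HkL HkN] := pick_notin (Ln_uniq n) Hlen.
move: HkN; rewrite !mem_cat !negb_or => /and3P[HkC HkW0 HkF].
have HkF' : forall f, f \in F -> k \notin f.2.
  move=> f Hf; apply/negP => Hk; move/negP: HkF; apply; apply/in_adom; exists f => //.
  by rewrite in_fs.
have [W [HW PW HFW HkW]] := avoid_world Hpdb Hprod Hconf HD PD HFD HW0 PW0 HkW0 HkF'.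
have He0W : e0 \in apply_view S2 Phi W.
  apply: (view_mono Hu _ He0F) => f; rewrite in_fs; exact: HFW.
have : (VFO @` DomFO) (apply_view S2 Phi W) by rewrite HDom'; exists W.
move=> [_ [m' _ <-] HVW].
have Hm' : (e0 \in Dm m') && closedb (Dm m') by rewrite -in_VFO; [rewrite HVW|exact: Dm_over].
case/andP: Hm' => He0m Hcl.
have /in_Ln [i Hi Hki] := HkL.
have Hbk : bit k m'.
  rewrite Hki; apply: (comp_closed Hcl (leq0n n)) => //; by rewrite -edge_in_Dm.
have Hek : edge k \in apply_view S2 Phi W.
  by rewrite -HVW in_VFO; [rewrite edge_in_Dm Hbk Hcl|exact: Dm_over].
have [|] := view_elems Hek (mem_head k _); first by apply/negP.
by apply/negP.
Qed.


End PartE.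

Local Open Scope classical_set_scope.

Theorem proposition7p14 :
  (forall (S' : schema) (Dom' : classical_sets.set instance) (P' : instance -> Rdefinitions.R),
      UCQ_BID S' Dom' P' -> FO_BID S' Dom' P') /\
  (exists (S' : schema) (Dom' : classical_sets.set instance) (P' : instance -> Rdefinitions.R),
      FO_BID S' Dom' P' /\ ~ UCQ_BID S' Dom' P').
Proof.
split.
- move=> S' Dom' P' [S [Dom [P [Phi [Hb Hv Hi]]]]]; exists S, Dom, P, Phi; split => //.
  case: Hv => H1 H2 H3; split => // r Hr; by case/and3P: (H3 r Hr) => -> ->.
- exists S2, (VFO @` DomFO), (fun D' => Pr DomFO PFO [set D | VFO D = D']); split.
    exists S2, DomFO, PFO, [:: PhiFO]; split => //; first exact: bidFO.
    by split => // -[|r].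
  exact: not_ucq_FO.
Qed.
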